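(* Let $G=(C,D,E)$ be a finite bipartite graph with left vertex set $C$, right vertex set $D$, and edge set $E\subseteq C\times D$. Then there exist $a,b\in\mathbb{N}$ with $b\le a$ such that $G$ is isomorphic to an induced subgraph of $B_{a,b}$.
   Context: For $n\in\mathbb{N}$, $[n]=\{1,\dots,n\}$, and for a set $X$, $\binom{X}{k}$ denotes the set of $k$-element subsets of $X$. For $k\le n$, $B_{n,k}$ is the bipartite graph with left vertex set $[n]$, right vertex set $\binom{[n]}{k}$, and edge set $\{(x,X)\in[n]\times\binom{[n]}{k} : x\in X\}$. For a graph $H=(V,E)$ and $V'\subseteq V$, the induced subgraph on $V'$ has vertex set $V'$ and edge set consisting of all edges of $H$ with both endpoints in $V'$. *)

(* Defs.v *)
From mathcomp Require Import all_boot.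
Set Implicit Arguments. Unset Strict Implicit. Unset Printing Implicit Defensive.

(* The set [n] = {1,...,n} is represented by 'I_n = {0,...,n-1}
   (shift by one; irrelevant for the statement). *)

Definition ksubset (n k : nat) := {X : {set 'I_n} | #|X| == k}.

Definition B_edge (n k : nat) (x : 'I_n) (X : ksubset n k) : bool :=
  x \in val X.

(* G = (C,D,E) is isomorphic (as a bipartite graph, left side to left side,
   right side to right side) to the subgraph of B_{n,k} induced on the
   vertex set L ∪ R with L ⊆ [n], R ⊆ binom([n],k):
   there are bijections f : C -> L and g : D -> R such that
   (c,d) ∈ E  <->  (f c, g d) is an edge of B_{n,k}.
   (The induced subgraph on L ∪ R has exactly the B-edges between L and R,
   since B_{n,k} has no edges inside either side.) *)
Definition iso_to_induced_sub_B (C D : finType) (E : C -> D -> bool)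
    (n k : nat) (L : {set 'I_n}) (R : {set ksubset n k}) : Prop :=
  exists (f : C -> 'I_n) (g : D -> ksubset n k),
    [/\ injective f, f @: [set: C] = L,
        injective g, g @: [set: D] = R &
        forall c d, E c d = B_edge (f c) (g d)].

Definition is_induced_sub_B (C D : finType) (E : C -> D -> bool)
    (n k : nat) : Prop :=
  exists (L : {set 'I_n}) (R : {set ksubset n k}),
    iso_to_induced_sub_B E L R.

(* Main.v *)
Require Import Defs.
From mathcomp Require Import all_boot.
From mathcomp Require Import zify.

Section S.
Variables (C D : finType) (E : C -> D -> bool).
Let m := #|C|.
Let p := #|D|.
Let N := (m + m + p)%N.
Lemma rk_lt (c : C) : (enum_rank c < #|C|)%N.
Proof. exact: ltn_ord. Qed.
Lemma rkd_lt (d : D) : (enum_rank d < #|D|)%N.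
Proof. exact: ltn_ord. Qed.
Definition vf (c : C) : nat := enum_rank c.
Definition vf' (c : C) : nat := (#|C| + enum_rank c)%N.
Definition vm (d : D) : nat := (#|C| + #|C| + enum_rank d)%N.
Lemma vf_lt c : vf c < N.+1.
Proof. rewrite /vf /N /m; have := rk_lt c; lia. Qed.
Lemma vf'_lt c : vf' c < N.+1.
Proof. rewrite /vf' /N /m; have := rk_lt c; lia. Qed.
Lemma vm_lt d : vm d < N.+1.
Proof. rewrite /vm /N /m /p; have := rkd_lt d; lia. Qed.
Definition phi (d : D) (o : option C) : 'I_N.+1 :=
  match o with
  | None => inord (vm d)
  | Some c => if E c d then inord (vf c) else inord (vf' c)
  end.
Lemma val_phi d o : val (phi d o) =
  match o with None => vm d | Some c => if E c d then vf c else vf' c end.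
Proof. case: o => [c|] /=; last by rewrite inordK // vm_lt.
case: (E c d); by rewrite inordK // ?vf_lt ?vf'_lt. Qed.
Lemma enum_rank_nat_inj (T : finType) (x y : T) : (enum_rank x = enum_rank y :> nat) -> x = y.
Proof. move=> H; apply: enum_rank_inj; exact: val_inj. Qed.
Lemma phi_inj d : injective (phi d).
Proof.
move=> o1 o2 /(congr1 val); rewrite !val_phi /vf /vf' /vm.
case: o1 => [c1|]; case: o2 => [c2|];
  try (case: (E c1 d)); try (case: (E c2 d)); try (have := rk_lt c1); try (have := rk_lt c2);
  rewrite /m => *; try lia;
  try (by congr Some; apply: enum_rank_nat_inj; lia);
  try (by congr (fun x => x); apply: enum_rank_nat_inj; lia).
Qed.
Lemma card_phi d : #|phi d @: [set: option C]| == m.+1.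
Proof. by rewrite card_imset ?cardsT ?card_option //; apply: phi_inj. Qed.
Definition g (d : D) : ksubset N.+1 m.+1 := exist (fun X : {set 'I_N.+1} => #|X| == m.+1) _ (card_phi d).
Definition f (c : C) : 'I_N.+1 := inord (vf c).
Lemma f_inj : injective f.
Proof. move=> x y /(congr1 val) /=; rewrite /f !inordK ?vf_lt // /vf.
exact: enum_rank_nat_inj. Qed.
Lemma g_inj : injective g.
Proof.
move=> d1 d2 H.
have : inord (vm d1) \in val (g d2) by rewrite -H; apply/imsetP; exists None.
case/imsetP => o _ /(congr1 val) /=; rewrite val_phi inordK ?vm_lt //.
case: o => [c|]; last by rewrite /vm => ?; apply: enum_rank_nat_inj; lia.
have := rk_lt c; rewrite /vm /vf /vf' /m; case: (E c d2) => /= *; lia.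
Qed.
Lemma edgeE c d : E c d = B_edge (f c) (g d).
Proof.
rewrite /B_edge /=; apply/idP/imsetP.
  by move=> Hc; exists (Some c); rewrite ?inE // /phi Hc.
case=> o _ /(congr1 val) /=; rewrite val_phi /f inordK ?vf_lt //.
case: o => [c'|]; last by have := rk_lt c; rewrite /vm /vf /m; lia.
have := rk_lt c; have := rk_lt c'; rewrite /vf /vf' /m.
case Ec: (E c' d) => /= H1 H2 Heq; last lia.
by have -> : c = c' by apply: enum_rank_inj; apply: val_inj; exact: Heq.
Qed.
End S.

Theorem mainTheorem5 (C D : finType) (E : C -> D -> bool) :
  exists a b : nat, b <= a /\ is_induced_sub_B E a b.
Proof.
exists (#|C| + #|C| + #|D|).+1, #|C|.+1; split; first by lia.
exists (@f C D @: [set: C]), (@g C D E @: [set: D]).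
exists (@f C D), (@g C D E); split => //; [exact: f_inj| exact: g_inj| exact: edgeE].
Qed.
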